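(* Let a trained classification model have feature space $\Phi\subseteq\mathbb{R}^f$ and produce logits $z=Wx_\phi+b$ for a feature vector $x_\phi\in\Phi$, where $W\in\mathbb{R}^{n\times f}$, $b\in\mathbb{R}^n$, $n$ the number of classes. Let $x$ be an input whose feature vector $x_\phi$ has distance at most $\delta$ from the closest decision boundary in $\Phi$, i.e. $d^{f,\min}_\phi(x)\le\delta$. Then $$\max\mathrm{softmax}(Wx_\phi+b)\;\le\;\frac{e^{\delta\rho'(W)}}{e^{\delta\rho'(W)}+1},\qquad \rho'(W)=\max_{i\ne j,\ i,j\in\{1,\dots,n\}}\|W[j]-W[i]\|_2.$$
   Context: $W[k]$ denotes the $k$-th row of $W$. The classification of an input is the index of its largest logit. The decision boundary between classes $i$ and $j$ is the set of $y\in\Phi$ with $W[i]y+b[i]=W[j]y+b[j]\ge W[k]y+b[k]$ for all $k\notin\{i,j\}$; $d^{f,\min}_\phi(x)$ is the Euclidean distance from $x_\phi$ to the union of the decision boundaries between the class of $x$ and the other classes. $\mathrm{softmax}(z)[k]=e^{z[k]}/\sum_{l}e^{z[l]}$. *)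

(* Defs.v *)
From HB Require Import structures.
From mathcomp Require Import all_boot all_order all_algebra.
From mathcomp Require Import all_classical all_reals all_analysis.
Set Implicit Arguments. Unset Strict Implicit. Unset Printing Implicit Defensive.
Import Order.TTheory GRing.Theory Num.Theory.
Local Open Scope classical_set_scope.
Local Open Scope ring_scope.

Definition enormr (R : realType) (f : nat) (v : 'rV[R]_f) : R :=
  Num.sqrt (\sum_(i < f) v 0 i ^+ 2).
Definition enormc (R : realType) (f : nat) (v : 'cV[R]_f) : R :=
  Num.sqrt (\sum_(i < f) v i 0 ^+ 2).

Definition logits (R : realType) (n f : nat) (W : 'M[R]_(n, f)) (b : 'cV[R]_n)
  (y : 'cV[R]_f) : 'cV[R]_n := W *m y + b.

Definition boundary (R : realType) (n f : nat) (W : 'M[R]_(n, f)) (b : 'cV[R]_n)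
  (Phi : set 'cV[R]_f) (i j : 'I_n) : set 'cV[R]_f :=
  [set y | Phi y /\ logits W b y i 0 = logits W b y j 0 /\
     forall k : 'I_n, k != i -> k != j -> logits W b y k 0 <= logits W b y i 0].

(* d^{f,min}_phi : distance (in \bar R, +oo for an empty union) from x_phi to the
   union of the decision boundaries between class c and the other classes *)
Definition dmin (R : realType) (n f : nat) (W : 'M[R]_(n, f)) (b : 'cV[R]_n)
  (Phi : set 'cV[R]_f) (c : 'I_n) (xphi : 'cV[R]_f) : \bar R :=
  ereal_inf [set ((enormc (xphi - y))%:E) | y in
    \bigcup_(j in [set j : 'I_n | j != c]) boundary W b Phi c j].

Definition softmax (R : realType) (n : nat) (z : 'cV[R]_n) (k : 'I_n) : R :=
  expR (z k 0) / \sum_(l < n) expR (z l 0).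

Definition max_softmax (R : realType) (n : nat) (z : 'cV[R]_n) : R :=
  \big[Num.max/0]_(k < n) softmax z k.

Definition rho' (R : realType) (n f : nat) (W : 'M[R]_(n, f)) : R :=
  \big[Num.max/0]_(i < n) \big[Num.max/0]_(j < n | i != j)
     enormr (row j W - row i W).

(* Main.v *)
Require Import Defs.
From mathcomp Require Import all_boot all_order all_algebra.
From mathcomp Require Import all_classical all_reals all_analysis.
From mathcomp Require Import ring lra.
Import Order.TTheory GRing.Theory Num.Theory.
Local Open Scope classical_set_scope.
Local Open Scope ring_scope.

Lemma cs_sum (R : realType) (f : nat) (a b : 'I_f -> R) :
  \sum_i a i * b i <= Num.sqrt (\sum_i a i ^+ 2) * Num.sqrt (\sum_i b i ^+ 2).
Proof.
set A := \sum_i a i ^+ 2; set B := \sum_i b i ^+ 2; set C := \sum_i a i * b i.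
have A0 : 0 <= A by apply: sumr_ge0 => i _; exact: sqr_ge0.
have B0 : 0 <= B by apply: sumr_ge0 => i _; exact: sqr_ge0.
have key : C ^+ 2 <= A * B.
  have [Ae0|Ap] := eqVneq A 0.
    have ha : forall i, a i = 0.
      move=> i; apply/eqP; rewrite -sqrf_eq0; apply/eqP.
      by apply: (psumr_eq0P (P := xpredT) (F := fun i => a i ^+ 2)) => // j _; exact: sqr_ge0.
    have -> : C = 0 by rewrite /C big1 // => i _; rewrite ha mul0r.
    by rewrite expr0n /= mulr_ge0.
  have Apos : 0 < A by rewrite lt_def Ap A0.
  set t := C / A.
  have h : 0 <= \sum_i (a i * t - b i) ^+ 2 by apply: sumr_ge0 => i _; exact: sqr_ge0.
  have e : \sum_i (a i * t - b i) ^+ 2 = t ^+ 2 * A - (t * 2) * C + B.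
    rewrite (eq_bigr (fun i => t ^+ 2 * a i ^+ 2 - (t * 2) * (a i * b i) + b i ^+ 2)); last first.
      by move=> i _; ring.
    by rewrite big_split /= sumrB -!mulr_sumr.
  rewrite e /t in h.
  have h2 : 0 <= B - C ^+ 2 / A.
    suff -> : B - C ^+ 2 / A = (C / A) ^+ 2 * A - C / A * 2 * C + B by [].
    by field; rewrite Ap.
  rewrite subr_ge0 ler_pdivrMr // in h2.
  by rewrite mulrC.
apply: (le_trans (ler_norm C)).
rewrite -sqrtrM // -sqrtr_sqr.
by rewrite ler_sqrt ?mulr_ge0 // real_normK ?num_real.
Qed.

Lemma diff_logits (R : realType) (n f : nat) (W : 'M[R]_(n, f)) (b : 'cV[R]_n)
  (x y : 'cV[R]_f) (c j : 'I_n) :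
  logits W b x c 0 - logits W b x j 0 =
  (logits W b y c 0 - logits W b y j 0) +
  \sum_i (W c i - W j i) * (x i 0 - y i 0).
Proof.
rewrite /logits !mxE.
have -> : \sum_i (W c i - W j i) * (x i 0 - y i 0) =
  \sum_i W c i * x i 0 - \sum_i W j i * x i 0 - (\sum_i W c i * y i 0 - \sum_i W j i * y i 0).
  rewrite -!sumrB; apply: eq_bigr => i _; ring.
ring.
Qed.

Lemma rho_ge (R : realType) (n f : nat) (W : 'M[R]_(n, f)) (c j : 'I_n) :
  c != j -> enormr (row j W - row c W) <= rho' W.
Proof.
move=> cj; rewrite /rho'.
apply: le_trans (le_bigmax _ _ c).
by apply: le_bigmax_cond.
Qed.

Theorem theorem2 (R : realType) (n f : nat) (W : 'M[R]_(n, f)) (b : 'cV[R]_n)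
  (Phi : set 'cV[R]_f) (xphi : 'cV[R]_f) (c : 'I_n) (delta : R) :
  Phi xphi ->
  (forall k : 'I_n, logits W b xphi k 0 <= logits W b xphi c 0) ->
  (dmin W b Phi c xphi <= delta%:E)%E ->
  max_softmax (logits W b xphi) <=
    expR (delta * rho' W) / (expR (delta * rho' W) + 1).
Proof.
move=> _ hmax hd.
set z := logits W b xphi.
have key : forall e : R, 0 < e -> exists2 j : 'I_n, j != c &
    z c 0 - z j 0 <= (delta + e) * rho' W.
  move=> e e0.
  have : (dmin W b Phi c xphi < (delta + e)%:E)%E.
    by apply: le_lt_trans hd _; rewrite lte_fin ltrDl.
  move=> /ereal_inf_lt [_ [y [j /= jc Hb] <-]].
  rewrite lte_fin => hy.
  exists j => //.
  case: Hb => _ [Heq _].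
  rewrite /z (@diff_logits R n f W b xphi y c j) Heq subrr add0r.

  apply: le_trans (@cs_sum R f (fun i => W c i - W j i) (fun i => xphi i 0 - y i 0)) _.
  have n0 : 0 <= enormc (xphi - y) by apply: sqrtr_ge0.
  have -> : Num.sqrt (\sum_i (W c i - W j i) ^+ 2) = enormr (row j W - row c W).
    rewrite /enormr; congr Num.sqrt; apply: eq_bigr => i _; rewrite !mxE; ring.
  have -> : Num.sqrt (\sum_i (xphi i 0 - y i 0) ^+ 2) = enormc (xphi - y).
    rewrite /enormc; congr Num.sqrt; apply: eq_bigr => i _; rewrite !mxE //.
  rewrite mulrC; apply: ler_pM => //; first exact: sqrtr_ge0.
    exact: ltW.
  by apply: rho_ge; rewrite eq_sym.
have [j1 j1c _] := key 1 ltr01.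
set jm := [arg max_(j > j1 | j != c) z j 0]%O.
have [jmc jmmax] : jm != c /\ forall j, j != c -> z j 0 <= z jm 0.
  by rewrite /jm; case: arg_maxP => // i ic H; split.
have hjm : z c 0 <= delta * rho' W + z jm 0.
  rewrite -lerBlDr; apply/ler_addgt0Pr => e e0.
  have [e' e'0 He'] : exists2 e', 0 < e' & e' * rho' W <= e.
    have r0 : 0 <= rho' W.
      apply: le_trans (@rho_ge R n f W c jm _); first exact: sqrtr_ge0.
      by rewrite eq_sym.
    exists (e / (rho' W + 1)); first by rewrite divr_gt0 // ltr_wpDl.
    rewrite mulrAC ler_pdivrMr ?ltr_wpDl //; nra.
  have [j jc Hj] := key e' e'0.
  have := jmmax j jc.
  rewrite lerBlDr.
  move: Hj; rewrite mulrDl; lra.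
set E := expR (delta * rho' W).
set S := \sum_(l < n) expR (z l 0).
have Sge : expR (z c 0) + expR (z jm 0) <= S.
  rewrite /S (bigD1 c) //= (bigD1 jm) //= addrA lerDl.
  by apply: sumr_ge0 => i _; exact: expR_ge0.
have Spos : 0 < S by apply: lt_le_trans Sge; rewrite ltr_wpDr ?expR_ge0 ?expR_gt0.
have E0 : 0 < E by apply: expR_gt0.
have E1 : 0 < E + 1 by rewrite ltr_wpDl // ltW.
have hc : softmax z c <= E / (E + 1).
  rewrite /softmax -/S ler_pdivrMr // mulrAC ler_pdivlMr //.
  have h : expR (z c 0) <= E * expR (z jm 0) by rewrite -expRD ler_expR.
  nra.
rewrite /max_softmax.
apply: bigmax_le; first by rewrite divr_ge0 // ltW.
move=> k _; apply: le_trans hc.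
rewrite /softmax -/S; apply: ler_wpM2r; first by rewrite invr_ge0 ltW.
by rewrite ler_expR; exact: hmax.
Qed.
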